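(* Let $a_1,\dots,a_n$ be positive integers and $\mathcal{G}=\mathcal{G}[a_1,\dots,a_n]$, and let $e_d$ be the last edge of this presentation of $\mathcal{G}$. (a) The reflection of $\mathcal{G}$ in the line $y=x$ is (a translate of) $\mathcal{G}[1,a_1-1,a_2,\dots,a_n]$; in particular $\mathcal{G}[a_1,\dots,a_n]\cong\mathcal{G}[1,a_1-1,a_2,\dots,a_n]$. (b) The reflection of $\mathcal{G}$ in the line $y=-x$ is (a translate of) $\mathcal{G}[1,a_n-1,a_{n-1},\dots,a_2,a_1]$ if $e_d$ is the north edge of the last tile, and of $\mathcal{G}[a_n,\dots,a_2,a_1]$ if $e_d$ is the east edge of the last tile. (c) The rotation of $\mathcal{G}$ by $180^\circ$ is (a translate of) $\mathcal{G}[a_n,\dots,a_2,a_1]$ if $e_d$ is the north edge of the last tile, and of $\mathcal{G}[1,a_n-1,a_{n-1},\dots,a_2,a_1]$ if $e_d$ is the east edge of the last tile.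
   Context: A tile is a unit square in the plane with sides parallel to the axes, viewed as a graph with 4 vertices and 4 edges. A snake graph with $d\ge1$ tiles is a planar graph which is the union of tiles $G_1,\dots,G_d$ with each $G_{i+1}$ the translate of $G_i$ by $(0,1)$ or $(1,0)$, so that $G_i,G_{i+1}$ share exactly one edge $e_i$; snake graphs are considered up to translation. A sign function on a snake graph is a map $f$ from edges to $\{+,-\}$ such that in each tile the north and west edges have the same sign, the south and east edges have the same sign, and north and south edges have opposite signs. For positive integers $a_1,\dots,a_n$ with $d=a_1+\dots+a_n-1\ge1$, $\mathcal{G}[a_1,\dots,a_n]$ is the unique snake graph with tiles $G_1,\dots,G_d$ admitting a sign function $f$ and an edge $e_d\in\{\text{north edge of }G_d,\text{east edge of }G_d\}$ such that, with $e_0$ the south edge of $G_1$ and $e_i$ ($1\le i\le d-1$) the edge shared by $G_i,G_{i+1}$, the sequence $(f(e_0),\dots,f(e_d))$ consists of $a_1$ copies of a sign $s$, then $a_2$ copies of $-s$, then $a_3$ copies of $s$, etc.; the edge $e_d$ is then uniquely determined by the sequence $(a_1,\dots,a_n)$ and is called the last edge of this presentation. Sequences with an entry equal to $0$ are interpreted via $[\dots,a,0,b,\dots]=[\dots,a+b,\dots]$ (e.g. $\mathcal{G}[1,0,b,\dots]=\mathcal{G}[1+b,\dots]$). *)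

(* Defs.v *)
From Stdlib Require Import ZArith List Bool Lia.
Import ListNotations.
Open Scope Z_scope.

(* A unit edge of the integer lattice:
   H x y = segment (x,y)-(x+1,y),  V x y = segment (x,y)-(x,y+1). *)
Inductive edge : Type := H (x y : Z) | V (x y : Z).

(* Edges of the tile (unit square) with lower-left corner (x,y). *)
Definition south (p : Z * Z) : edge := H (fst p) (snd p).
Definition north (p : Z * Z) : edge := H (fst p) (snd p + 1).
Definition west  (p : Z * Z) : edge := V (fst p) (snd p).
Definition east  (p : Z * Z) : edge := V (fst p + 1) (snd p).

(* A snake graph (up to translation) is given by its list of steps:
   s has length d-1, entry true = G_{i+1} is G_i translated by (1,0) (east),
   false = translated by (0,1) (north). Tiles are indexed 0..d-1 here
   (tile i here is G_{i+1} of the paper); tile 0 has lower-left corner (0,0). *)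
Definition tpos (s : list bool) (i : nat) : Z * Z :=
  (Z.of_nat (count_occ Bool.bool_dec (firstn i s) true),
   Z.of_nat (count_occ Bool.bool_dec (firstn i s) false)).

Definition in_tile (p : Z * Z) (e : edge) : Prop :=
  e = south p \/ e = north p \/ e = west p \/ e = east p.

Definition snake_edges (s : list bool) (e : edge) : Prop :=
  exists i : nat, (i <= length s)%nat /\ in_tile (tpos s i) e.

(* Sign function (sign + = true, - = false), given as a function on all
   lattice edges; only its values on the edges of the snake matter. *)
Definition sign_fun (s : list bool) (f : edge -> bool) : Prop :=
  forall i : nat, (i <= length s)%nat ->
    f (north (tpos s i)) = f (west (tpos s i)) /\
    f (south (tpos s i)) = f (east (tpos s i)) /\
    f (north (tpos s i)) <> f (south (tpos s i)).

(* e_1, ..., e_{d-1}: edge shared by G_i and G_{i+1}. *)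
Definition interior_edges (s : list bool) : list edge :=
  map (fun i => if nth i s false then east (tpos s i) else north (tpos s i))
      (seq 0 (length s)).

Inductive last_kind : Type := LNorth | LEast.

Definition last_edge (s : list bool) (k : last_kind) : edge :=
  match k with
  | LNorth => north (tpos s (length s))
  | LEast => east (tpos s (length s))
  end.

(* a_1 copies of sg, then a_2 copies of -sg, ...  Zero entries merge the
   neighbouring blocks, which is exactly the convention [..,a,0,b,..]=[..,a+b,..]. *)
Fixpoint sign_pattern (sg : bool) (a : list nat) : list bool :=
  match a with
  | [] => []
  | k :: r => repeat sg k ++ sign_pattern (negb sg) r
  end.

(* is_G a s k : the snake graph with step list s is G[a_1,...,a_n]
   and k is (the kind of) the last edge e_d of this presentation. *)
Definition is_G (a : list nat) (s : list bool) (k : last_kind) : Prop :=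
  exists f : edge -> bool, sign_fun s f /\
  exists sg : bool,
    map f (south (tpos s 0) :: interior_edges s ++ [last_edge s k])
    = sign_pattern sg a.

(* reflection in y = x : (x,y) |-> (y,x) *)
Definition refl_diag (e : edge) : edge :=
  match e with H x y => V y x | V x y => H y x end.
(* reflection in y = -x : (x,y) |-> (-y,-x) *)
Definition refl_antidiag (e : edge) : edge :=
  match e with H x y => V (- y) (- x - 1) | V x y => H (- y - 1) (- x) end.
(* rotation by 180 degrees : (x,y) |-> (-x,-y) *)
Definition rot180 (e : edge) : edge :=
  match e with H x y => H (- x - 1) (- y) | V x y => V (- x) (- y - 1) end.
Definition shift (u v : Z) (e : edge) : edge :=
  match e with H x y => H (x + u) (y + v) | V x y => V (x + u) (y + v) end.

Definition image (g : edge -> edge) (P : edge -> Prop) (e : edge) : Prop :=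
  exists e0, P e0 /\ e = g e0.

Definition translate_of (P Q : edge -> Prop) : Prop :=
  exists u v : Z, forall e, Q e <-> P (shift u v e).

Definition mod_first (a : list nat) : list nat :=
  match a with [] => [] | x :: r => 1%nat :: (x - 1)%nat :: r end.

Definition transform_is (g : edge -> edge) (s : list bool) (b : list nat) : Prop :=
  (exists s' k', is_G b s' k') /\
  forall s' k', is_G b s' k' -> translate_of (image g (snake_edges s)) (snake_edges s').

(* Main.v *)
Require Import Defs.
From Stdlib Require Import ZArith List Bool Lia.
Import ListNotations.
Open Scope Z_scope.

Lemma nth_mnegb i E : (i < length E)%nat -> nth i (map negb E) false = negb (nth i E false).
Proof. intros H. rewrite (nth_indep E false true) by lia. exact (map_nth negb E true i). Qed.

Definition compat (L E : list bool) : Prop :=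
  length L = length E /\
  forall i, (S i < length E)%nat ->
    xorb (nth i L false) (nth (S i) L false) = eqb (nth i E false) (nth (S i) E false).

Lemma compat_negb_E L E : compat L E -> compat L (map negb E).
Proof.
  intros [Hl Hc]; split; [rewrite length_map; auto|].
  intros i Hi; rewrite length_map in Hi.
  rewrite !nth_mnegb, Hc by lia.
  destruct (nth i E false), (nth (S i) E false); reflexivity.
Qed.

Lemma compat_negb_L L E : compat L E -> compat (map negb L) E.
Proof.
  intros [Hl Hc]; split; [rewrite length_map; auto|].
  intros i Hi.
  rewrite !nth_mnegb, <- Hc by lia.
  destruct (nth i L false), (nth (S i) L false); reflexivity.
Qed.

Lemma compat_ff x L e E :
  compat (x :: L) (e :: E) -> compat (x :: map negb L) (negb e :: E).
Proof.
  intros [Hl Hc]; split; [simpl in *; rewrite length_map; auto|].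
  intros [|i] Hi; simpl in Hi.
  - specialize (Hc 0%nat ltac:(simpl; lia)). simpl in *.
    destruct L as [|l L]; simpl in *; [lia|]. destruct E as [|e' E]; simpl in *; [lia|].
    destruct x, l, e, e'; simpl in *; congruence.
  - specialize (Hc (S i) ltac:(simpl; lia)). simpl in Hc |- *.
    simpl in Hl; rewrite ?length_map in Hl.
    rewrite !nth_mnegb, <- Hc by lia.
    destruct (nth i L false), (nth (S i) L false); reflexivity.
Qed.

Lemma compat_rev L E : compat L E -> compat (rev L) (rev E).
Proof.
  intros [Hl Hc]; split; [rewrite !length_rev; auto|].
  intros i Hi; rewrite length_rev in Hi.
  rewrite !rev_nth by lia. rewrite !Hl.
  replace (length E - S i)%nat with (S (length E - S (S i))) by lia.
  assert (Hc' := Hc (length E - S (S i))%nat ltac:(lia)).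
  revert Hc'.
  destruct (nth (length E - S (S i)) E false), (nth (S (length E - S (S i))) E false),
    (nth (length E - S (S i)) L false), (nth (S (length E - S (S i))) L false); simpl; congruence.
Qed.

Lemma compat_len L E : compat L E -> length L = length E.
Proof. intros [H _]; exact H. Qed.

Lemma compat_uniqE L1 E1 L2 E2 :
  compat L1 E1 -> compat L2 E2 -> (L2 = L1 \/ L2 = map negb L1) ->
  nth 0 E1 false = nth 0 E2 false -> E1 = E2.
Proof.
  intros [Hl1 Hc1] [Hl2 Hc2] HL H0.
  assert (Hlen : length E1 = length E2).
  { destruct HL; subst; rewrite ?length_map in *; lia. }
  apply nth_ext with (d := false) (d' := false); auto.
  intros n Hn. induction n as [|n IH]; auto.
  assert (IH' := IH ltac:(lia)).
  specialize (Hc1 n Hn). specialize (Hc2 n ltac:(lia)).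
  assert (xorb (nth n L2 false) (nth (S n) L2 false) = xorb (nth n L1 false) (nth (S n) L1 false)).
  { destruct HL as [->| ->]; auto.
    rewrite !nth_mnegb by lia. destruct (nth n L1 false), (nth (S n) L1 false); reflexivity. }
  rewrite H, Hc1, IH' in Hc2.
  destruct (nth n E2 false), (nth (S n) E1 false), (nth (S n) E2 false); simpl in *; congruence.
Qed.

Lemma compat_uniqL L1 L2 E :
  compat L1 E -> compat L2 E -> L2 = L1 \/ L2 = map negb L1.
Proof.
  intros [Hl1 Hc1] [Hl2 Hc2].
  destruct (bool_dec (nth 0 L1 false) (nth 0 L2 false)) as [Heq|Hne]; [left|right].
  - apply nth_ext with (d := false) (d' := false); [lia|].
    intros n Hn. induction n as [|n IH]; auto.
    specialize (Hc1 n ltac:(lia)). specialize (Hc2 n ltac:(lia)).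
    rewrite IH in Hc2 by lia. rewrite <- Hc1 in Hc2.
    destruct (nth n L1 false), (nth (S n) L1 false), (nth (S n) L2 false); simpl in *; congruence.
  - apply nth_ext with (d := false) (d' := negb false); [rewrite length_map; lia|].
    intros n Hn. change (negb false) with true.
    rewrite (nth_indep (map negb L1) true false) by (rewrite length_map; lia).
    rewrite nth_mnegb by lia. induction n as [|n IH].
    + destruct (nth 0 L1 false), (nth 0 L2 false); simpl in *; congruence.
    + specialize (Hc1 n ltac:(lia)). specialize (Hc2 n ltac:(lia)).
      rewrite IH in Hc2 by lia. rewrite <- Hc1 in Hc2.
      destruct (nth n L1 false), (nth (S n) L1 false), (nth (S n) L2 false); simpl in *; congruence.
Qed.

Lemma sp_negb sg b : sign_pattern (negb sg) b = map negb (sign_pattern sg b).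
Proof.
  revert sg; induction b as [|x b IH]; intros sg; simpl; auto.
  rewrite map_app, IH, map_repeat. reflexivity.
Qed.

Definition ffl (L : list bool) : list bool :=
  match L with [] => [] | x :: t => x :: map negb t end.

Lemma sp_mod_first sg x r : (0 < x)%nat ->
  sign_pattern sg (mod_first (x :: r)) = ffl (sign_pattern sg (x :: r)).
Proof.
  intros Hx. destruct x as [|x]; [lia|]. simpl.
  rewrite Nat.sub_0_r, map_app, map_repeat, <- sp_negb, negb_involutive. reflexivity.
Qed.

Fixpoint alt (c : bool) (n : nat) : bool :=
  match n with O => c | S n => negb (alt c n) end.

Lemma alt_negb c n : alt (negb c) n = negb (alt c n).
Proof. induction n; simpl; auto. rewrite IHn; auto. Qed.

Lemma alt_alt c n : alt (alt c n) n = c.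
Proof. induction n; simpl; auto. rewrite alt_negb, IHn, negb_involutive. auto. Qed.

Lemma sp_app_last c l x :
  sign_pattern c (l ++ [x]) = sign_pattern c l ++ repeat (alt c (length l)) x.
Proof.
  revert c; induction l as [|y l IH]; intros c; simpl.
  - rewrite app_nil_r; auto.
  - rewrite IH, app_assoc, alt_negb. reflexivity.
Qed.

Lemma sp_rev sg a :
  rev (sign_pattern sg a) = sign_pattern (alt sg (S (length a))) (rev a).
Proof.
  revert sg; induction a as [|x r IH]; intros sg; simpl; auto.
  rewrite rev_app_distr, IH, sp_app_last, length_rev, rev_repeat.
  f_equal. f_equal. simpl. rewrite alt_negb. reflexivity.
  f_equal. rewrite negb_involutive. symmetry; apply alt_alt.
Qed.

Definition kb (k : last_kind) : bool := match k with LNorth => false | LEast => true end.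
Definition EL (s : list bool) (k : last_kind) : list bool := false :: s ++ [kb k].
Definition edges (s : list bool) (k : last_kind) : list edge :=
  south (tpos s 0) :: interior_edges s ++ [last_edge s k].

Lemma firstn_S_nth (s : list bool) j : (j < length s)%nat ->
  firstn (S j) s = firstn j s ++ [nth j s false].
Proof.
  revert j; induction s as [|b s IH]; intros j Hj; simpl in *; [lia|].
  destruct j; simpl; auto. rewrite IH by lia. auto.
Qed.

Lemma tpos_S s j : (j < length s)%nat ->
  tpos s (S j) = if nth j s false then (fst (tpos s j) + 1, snd (tpos s j))
                 else (fst (tpos s j), snd (tpos s j) + 1).
Proof.
  intros Hj. unfold tpos. rewrite firstn_S_nth by auto.
  rewrite !count_occ_app. simpl.
  destruct (nth j s false); simpl; f_equal; lia.
Qed.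

Lemma nth_edges0 s k i : (i <= length s)%nat ->
  nth i (edges s k) (H 0 0) =
  if nth i (EL s k) false then west (tpos s i) else south (tpos s i).
Proof.
  intros Hi. destruct i as [|j]; [reflexivity|].
  unfold edges, EL. simpl.
  rewrite !app_nth1 by (unfold interior_edges; rewrite ?length_map, ?length_seq; lia).
  unfold interior_edges.
  set (g := fun i => if nth i s false then east (tpos s i) else north (tpos s i)).
  rewrite (nth_indep _ (H 0 0) (g 0%nat)) by (rewrite length_map, length_seq; lia).
  rewrite map_nth, seq_nth by lia. simpl. unfold g.
  rewrite tpos_S by lia.
  destruct (nth j s false); reflexivity.
Qed.

Lemma nth_edges1 s k i : (i <= length s)%nat ->
  nth (S i) (edges s k) (H 0 0) =
  if nth (S i) (EL s k) false then east (tpos s i) else north (tpos s i).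
Proof.
  intros Hi. unfold edges, EL. simpl.
  destruct (Nat.eq_dec i (length s)) as [->|Hne].
  - rewrite !app_nth2 by (unfold interior_edges; rewrite ?length_map, ?length_seq; lia).
    unfold interior_edges; rewrite ?length_map, ?length_seq, Nat.sub_diag. simpl.
    destruct k; reflexivity.
  - rewrite !app_nth1 by (unfold interior_edges; rewrite ?length_map, ?length_seq; lia).
    unfold interior_edges.
    set (g := fun i => if nth i s false then east (tpos s i) else north (tpos s i)).
    rewrite (nth_indep _ (H 0 0) (g 0%nat)) by (rewrite length_map, length_seq; lia).
    rewrite map_nth, seq_nth by lia. reflexivity.
Qed.

Lemma length_edges s k : length (edges s k) = S (S (length s)).
Proof. unfold edges, interior_edges; simpl. rewrite length_app, length_map, length_seq; simpl; lia. Qed.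

Lemma sign_compat s k f : sign_fun s f -> compat (map f (edges s k)) (EL s k).
Proof.
  intros Hf. split.
  - rewrite length_map, length_edges. unfold EL; simpl; rewrite length_app; simpl; lia.
  - intros i Hi. unfold EL in Hi; simpl in Hi; rewrite length_app in Hi; simpl in Hi.
    rewrite !(nth_indep (map f (edges s k)) false (f (H 0 0))) by (rewrite length_map, length_edges; lia).
    rewrite !map_nth, nth_edges0, nth_edges1 by lia.
    destruct (Hf i ltac:(lia)) as [h1 [h2 h3]].
    destruct (nth i (EL s k) false), (nth (S i) (EL s k) false);
    destruct (f (north (tpos s i))) eqn:E1, (f (south (tpos s i))) eqn:E2; simpl;
    rewrite <- ?h1, <- ?h2; try rewrite <- h1; try rewrite <- h2; simpl; congruence.
Qed.

Definition pf (e : edge) : bool :=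
  match e with H x y => Z.even (x + y) | V x y => Z.odd (x + y) end.

Lemma pf_sign s : sign_fun s pf.
Proof.
  intros i _. destruct (tpos s i) as [x y]. unfold north, south, west, east; simpl.
  replace (x + (y + 1)) with (Z.succ (x + y)) by lia.
  replace (x + 1 + y) with (Z.succ (x + y)) by lia.
  rewrite Z.even_succ, Z.odd_succ. split; auto. split; auto.
  rewrite <- Z.negb_even. destruct (Z.even (x + y)); discriminate.
Qed.

Ltac solve_tile :=
  first [ left; f_equal; lia
        | right; left; f_equal; lia
        | right; right; left; f_equal; lia
        | right; right; right; f_equal; lia ].

Ltac tile_brute :=
  let x := fresh "x" in let y := fresh "y" in
  let a := fresh "a" in let b := fresh "b" in let Hq := fresh "Hq" in
  intros [x y] [a b|a b]; unfold in_tile, south, north, west, east; simpl;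
  split; intros [Hq|[Hq|[Hq|Hq]]]; inversion Hq; subst; solve_tile.

Lemma in_tile_shift : forall p e u v,
  in_tile p (Defs.shift u v e) <-> in_tile (fst p - u, snd p - v) e.
Proof.
  intros [x y] [a b|a b] u v; unfold in_tile, south, north, west, east; simpl;
  split; intros [Hq|[Hq|[Hq|Hq]]]; inversion Hq; subst; solve_tile.
Qed.

Lemma in_tile_diag : forall p e,
  in_tile p (refl_diag e) <-> in_tile (snd p, fst p) e.
Proof. tile_brute. Qed.

Lemma in_tile_antidiag : forall p e,
  in_tile p (refl_antidiag e) <-> in_tile (- snd p - 1, - fst p - 1) e.
Proof. tile_brute. Qed.

Lemma in_tile_rot : forall p e,
  in_tile p (rot180 e) <-> in_tile (- fst p - 1, - snd p - 1) e.
Proof. tile_brute. Qed.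

Lemma diag_inv e : refl_diag (refl_diag e) = e.
Proof. destruct e; reflexivity. Qed.
Lemma antidiag_inv e : refl_antidiag (refl_antidiag e) = e.
Proof. destruct e; simpl; f_equal; lia. Qed.
Lemma rot_inv e : rot180 (rot180 e) = e.
Proof. destruct e; simpl; f_equal; lia. Qed.

Lemma count_map_negb (l : list bool) b :
  count_occ Bool.bool_dec (map negb l) b = count_occ Bool.bool_dec l (negb b).
Proof.
  induction l as [|c l IH]; simpl; auto.
  destruct c, b; simpl; rewrite IH; auto.
Qed.

Lemma tpos_negb s j : tpos (map negb s) j = (snd (tpos s j), fst (tpos s j)).
Proof.
  unfold tpos; simpl. rewrite firstn_map, !count_map_negb. reflexivity.
Qed.

Lemma count_split (l : list bool) m b :
  (count_occ Bool.bool_dec l b = count_occ Bool.bool_dec (firstn m l) b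
     + count_occ Bool.bool_dec (skipn m l) b)%nat.
Proof. rewrite <- count_occ_app, firstn_skipn. reflexivity. Qed.

Lemma tpos_rev s j : (j <= length s)%nat ->
  tpos (rev s) j = (fst (tpos s (length s)) - fst (tpos s (length s - j)),
                    snd (tpos s (length s)) - snd (tpos s (length s - j))).
Proof.
  intros Hj. unfold tpos; simpl. rewrite firstn_rev, !count_occ_rev, firstn_all.
  rewrite (count_split s (length s - j) true), (count_split s (length s - j) false).
  f_equal; lia.
Qed.

Lemma tpos_revneg s j : (j <= length s)%nat ->
  tpos (rev (map negb s)) j = (snd (tpos s (length s)) - snd (tpos s (length s - j)),
                    fst (tpos s (length s)) - fst (tpos s (length s - j))).
Proof.
  intros Hj. rewrite <- map_rev, tpos_negb, tpos_rev by auto. reflexivity.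
Qed.

Lemma transfer (g : edge -> edge) (psi : Z * Z -> Z * Z) s s' u v (sigma : nat -> nat) :
  (forall p e, in_tile p (g e) <-> in_tile (psi p) e) ->
  length s' = length s ->
  (forall j, (j <= length s)%nat -> (sigma j <= length s)%nat /\ sigma (sigma j) = j) ->
  (forall j, (j <= length s)%nat ->
     tpos s' j = (fst (psi (tpos s (sigma j))) - u, snd (psi (tpos s (sigma j))) - v)) ->
  forall e, snake_edges s' e <-> snake_edges s (g (Defs.shift u v e)).
Proof.
  intros Hg Hl Hs Ht e. unfold snake_edges. split.
  - intros [j [Hj Hin]]. rewrite Hl in Hj. exists (sigma j). split; [apply Hs; auto|].
    rewrite Hg, in_tile_shift, <- Ht by auto. exact Hin.
  - intros [i [Hi Hin]]. exists (sigma i). split; [rewrite Hl; apply Hs; auto|].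
    rewrite Ht by (apply Hs; auto). destruct (Hs i Hi) as [_ ->].
    rewrite Hg, in_tile_shift in Hin. exact Hin.
Qed.

Lemma EL_inj s k s2 k2 : EL s k = EL s2 k2 -> s = s2 /\ k = k2.
Proof.
  unfold EL. intros Heq. injection Heq as Heq.
  apply app_inj_tail in Heq. destruct Heq as [-> Hk].
  split; auto. destruct k, k2; simpl in Hk; try reflexivity; try discriminate Hk.
Qed.

Lemma transform_gen g psi s b s' k' sg u v sigma :
  (forall e, g (g e) = e) ->
  (forall p e, in_tile p (g e) <-> in_tile (psi p) e) ->
  length s' = length s ->
  (forall j, (j <= length s)%nat -> (sigma j <= length s)%nat /\ sigma (sigma j) = j) ->
  (forall j, (j <= length s)%nat ->
     tpos s' j = (fst (psi (tpos s (sigma j))) - u, snd (psi (tpos s (sigma j))) - v)) ->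
  compat (sign_pattern sg b) (EL s' k') ->
  transform_is g s b.
Proof.
  intros Hinv Hg Hl Hs Ht Hc. split.
  - exists s', k'. exists pf. split; [apply pf_sign|].
    destruct (compat_uniqL _ _ _ Hc (sign_compat s' k' pf (pf_sign s'))) as [E|E];
      [exists sg | exists (negb sg); rewrite sp_negb]; exact E.
  - intros s2 k2 [f2 [Hf2 [sg2 Heq2]]].
    assert (Hc2 := sign_compat s2 k2 f2 Hf2). unfold edges in Hc2. rewrite Heq2 in Hc2.
    assert (E : EL s' k' = EL s2 k2).
    { apply (compat_uniqE _ _ _ _ Hc Hc2); [|reflexivity].
      destruct (bool_dec sg2 sg) as [->|Hn]; [left; auto|right].
      replace sg2 with (negb sg) by (destruct sg, sg2; simpl; try reflexivity; exfalso; auto). apply sp_negb. }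
    apply EL_inj in E. destruct E as [<- <-].
    exists u, v. intros e. rewrite (transfer g psi s s' u v sigma Hg Hl Hs Ht e).
    unfold image. split.
    + intros Hin. exists (g (Defs.shift u v e)). split; auto.
    + intros [e0 [Hin ->]]. rewrite Hinv. exact Hin.
Qed.

Definition flipk (k : last_kind) : last_kind := match k with LNorth => LEast | LEast => LNorth end.

Lemma compat_nonnil L E : compat L E -> L = [] -> E = [].
Proof. intros [Hl _] ->. destruct E; simpl in *; auto; discriminate. Qed.

Lemma ffl_compat L E e : compat L (e :: E) -> compat (ffl L) (negb e :: E).
Proof.
  intros Hc. destruct L as [|x L].
  - apply compat_nonnil in Hc; auto; discriminate.
  - apply compat_ff; auto.
Qed.

Lemma case_a L s k : compat L (EL s k) -> compat (ffl L) (EL (map negb s) (flipk k)).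
Proof.
  intros Hc. apply compat_negb_E in Hc.
  replace (map negb (EL s k)) with (negb false :: map negb s ++ [negb (kb k)]) in Hc
    by (unfold EL; simpl; rewrite map_app; reflexivity).
  apply ffl_compat in Hc. rewrite negb_involutive in Hc.
  unfold EL. simpl in Hc. destruct k; exact Hc.
Qed.

Lemma case_bN L s : compat L (EL s LNorth) -> compat (ffl (rev L)) (EL (rev (map negb s)) LEast).
Proof.
  intros Hc. apply compat_negb_E, compat_rev in Hc.
  replace (rev (map negb (EL s LNorth))) with (negb false :: rev (map negb s) ++ [true]) in Hc
    by (unfold EL; simpl; rewrite map_app, !rev_app_distr; reflexivity).
  apply ffl_compat in Hc. exact Hc.
Qed.

Lemma case_bE L s : compat L (EL s LEast) -> compat (rev L) (EL (rev (map negb s)) LEast).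
Proof.
  intros Hc. apply compat_negb_E, compat_rev in Hc.
  replace (rev (map negb (EL s LEast))) with (false :: rev (map negb s) ++ [true]) in Hc
    by (unfold EL; simpl; rewrite map_app, !rev_app_distr; reflexivity).
  exact Hc.
Qed.

Lemma case_cN L s : compat L (EL s LNorth) -> compat (rev L) (EL (rev s) LNorth).
Proof.
  intros Hc. apply compat_rev in Hc.
  replace (rev (EL s LNorth)) with (false :: rev s ++ [false]) in Hc
    by (unfold EL; simpl; rewrite !rev_app_distr; reflexivity).
  exact Hc.
Qed.

Lemma case_cE L s : compat L (EL s LEast) -> compat (ffl (rev L)) (EL (rev s) LNorth).
Proof.
  intros Hc. apply compat_rev in Hc.
  replace (rev (EL s LEast)) with (true :: rev s ++ [false]) in Hc
    by (unfold EL; simpl; rewrite !rev_app_distr; reflexivity).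
  apply ffl_compat in Hc. exact Hc.
Qed.

Theorem proposition3p1 (a : list nat) (s : list bool) (k : last_kind) :
  (forall x, In x a -> (0 < x)%nat) ->
  is_G a s k ->
  (* (a) *)
  transform_is refl_diag s (mod_first a) /\
  (* (b) *)
  (k = LNorth -> transform_is refl_antidiag s (mod_first (rev a))) /\
  (k = LEast -> transform_is refl_antidiag s (rev a)) /\
  (* (c) *)
  (k = LNorth -> transform_is rot180 s (rev a)) /\
  (k = LEast -> transform_is rot180 s (mod_first (rev a))).
Proof.
  intros Hpos [f [Hf [sg Heq]]].
  assert (Hc := sign_compat s k f Hf). unfold edges in Hc. rewrite Heq in Hc.
  destruct a as [|x r].
  { apply compat_nonnil in Hc; [unfold EL in Hc; discriminate | reflexivity]. }
  assert (Hx : (0 < x)%nat) by (apply Hpos; left; auto).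
  assert (Hrev : exists y r', rev (x :: r) = y :: r' /\ (0 < y)%nat).
  { destruct (rev (x :: r)) as [|y r'] eqn:E.
    - apply (f_equal (@length nat)) in E. rewrite length_rev in E. discriminate.
    - exists y, r'. split; auto. apply Hpos. rewrite in_rev, E. left; auto. }
  destruct Hrev as [y [r' [Er Hy]]].
  assert (Hs : forall j, (j <= length s)%nat -> (length s - j <= length s)%nat /\ (length s - (length s - j))%nat = j) by (intros; lia).
  assert (Hid : forall j, (j <= length s)%nat -> (j <= length s)%nat /\ j = j) by auto.
  split; [|split; [|split; [|split]]].
  - apply (transform_gen refl_diag (fun p => (snd p, fst p)) s (mod_first (x :: r))
             (map negb s) (flipk k) sg 0 0 (fun j => j)); auto.
    + apply diag_inv.
    + apply in_tile_diag.
    + apply length_map.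
    + intros j _. rewrite tpos_negb. simpl. f_equal; lia.
    + rewrite sp_mod_first by auto. apply case_a; auto.
  - intros ->.
    apply (transform_gen refl_antidiag (fun p => (- snd p - 1, - fst p - 1)) s _
             (rev (map negb s)) LEast (alt sg (S (length (x :: r))))
             (- snd (tpos s (length s)) - 1) (- fst (tpos s (length s)) - 1)
             (fun j => length s - j)%nat); auto.
    + apply antidiag_inv.
    + apply in_tile_antidiag.
    + rewrite length_rev, length_map; auto.
    + intros j Hj. rewrite tpos_revneg by auto. simpl. f_equal; lia.
    + rewrite Er, sp_mod_first, <- Er, <- sp_rev by auto. apply case_bN; auto.
  - intros ->.
    apply (transform_gen refl_antidiag (fun p => (- snd p - 1, - fst p - 1)) s _
             (rev (map negb s)) LEast (alt sg (S (length (x :: r))))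
             (- snd (tpos s (length s)) - 1) (- fst (tpos s (length s)) - 1)
             (fun j => length s - j)%nat); auto.
    + apply antidiag_inv.
    + apply in_tile_antidiag.
    + rewrite length_rev, length_map; auto.
    + intros j Hj. rewrite tpos_revneg by auto. simpl. f_equal; lia.
    + rewrite <- sp_rev. apply case_bE; auto.
  - intros ->.
    apply (transform_gen rot180 (fun p => (- fst p - 1, - snd p - 1)) s _
             (rev s) LNorth (alt sg (S (length (x :: r))))
             (- fst (tpos s (length s)) - 1) (- snd (tpos s (length s)) - 1)
             (fun j => length s - j)%nat); auto.
    + apply rot_inv.
    + apply in_tile_rot.
    + rewrite length_rev; auto.
    + intros j Hj. rewrite tpos_rev by auto. simpl. f_equal; lia.
    + rewrite <- sp_rev. apply case_cN; auto.
  - intros ->.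
    apply (transform_gen rot180 (fun p => (- fst p - 1, - snd p - 1)) s _
             (rev s) LNorth (alt sg (S (length (x :: r))))
             (- fst (tpos s (length s)) - 1) (- snd (tpos s (length s)) - 1)
             (fun j => length s - j)%nat); auto.
    + apply rot_inv.
    + apply in_tile_rot.
    + rewrite length_rev; auto.
    + intros j Hj. rewrite tpos_rev by auto. simpl. f_equal; lia.
    + rewrite Er, sp_mod_first, <- Er, <- sp_rev by auto. apply case_cE; auto.
Qed.
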